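(* There is an absolute constant $C$ such that for every $n\geq 1$, every $w\in\{0,1\}^n$ and every binary string $w'\neq w$ of any length $\geq 1$, there is a prenex first-order sentence over $\tau_{\mathsf{string}}$ with at most $\log_2(n)+C$ quantifiers, whose quantifier prefix strictly alternates and ends with $\forall$, that is true in $\mathbf{B}_w$ and false in $\mathbf{B}_{w'}$.
   Context: Vocabulary $\tau_{\mathsf{string}}=\langle <, S;\ \mathsf{min},\mathsf{max}\rangle$ with $<$ binary, $S$ unary, $\mathsf{min},\mathsf{max}$ constants. A string $w=w_1\cdots w_n\in\{0,1\}^n$ ($n\geq 1$) is encoded by the structure $\mathbf{B}_w$ with universe $\{1,\dots,n\}$, $<$ the usual order, $S=\{i: w_i=1\}$, $\mathsf{min}=1$, $\mathsf{max}=n$. The number of quantifiers is the number of quantifier occurrences. *)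

(* Defs.v *)
From Stdlib Require Import Reals List Arith PeanoNat.
Import ListNotations.

Inductive term : Type :=
| TVar : nat -> term
| TMin : term
| TMax : term.

Inductive formula : Type :=
| FLt  : term -> term -> formula
| FS   : term -> formula
| FEq  : term -> term -> formula
| FTrue : formula
| FFalse : formula
| FNot : formula -> formula
| FAnd : formula -> formula -> formula
| FOr  : formula -> formula -> formula
| FImp : formula -> formula -> formula
| FEx  : nat -> formula -> formula
| FAll : nat -> formula -> formula.

Definition term_vars (t : term) : list nat :=
  match t with TVar i => [i] | _ => [] end.

Fixpoint free_vars (f : formula) : list nat :=
  match f with
  | FLt a b | FEq a b => term_vars a ++ term_vars b
  | FS a => term_vars a
  | FTrue | FFalse => []
  | FNot g => free_vars g
  | FAnd g h | FOr g h | FImp g h => free_vars g ++ free_vars h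
  | FEx i g | FAll i g => filter (fun j => negb (Nat.eqb i j)) (free_vars g)
  end.

Definition is_sentence (f : formula) : Prop := free_vars f = [].

Fixpoint qcount (f : formula) : nat :=
  match f with
  | FLt _ _ | FS _ | FEq _ _ | FTrue | FFalse => 0
  | FNot g => qcount g
  | FAnd g h | FOr g h | FImp g h => qcount g + qcount h
  | FEx _ g | FAll _ g => S (qcount g)
  end.

Definition quantifier_free (f : formula) : Prop := qcount f = 0.

(* Leading quantifier block: list of quantifier kinds (true = forall,
   false = exists), outermost first, and the remaining matrix. *)
Fixpoint qprefix (f : formula) : list bool :=
  match f with
  | FEx _ g => false :: qprefix g
  | FAll _ g => true :: qprefix g
  | _ => []
  end.

Fixpoint matrix (f : formula) : formula :=
  match f with
  | FEx _ g | FAll _ g => matrix g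
  | g => g
  end.

Definition prenex (f : formula) : Prop := quantifier_free (matrix f).

Fixpoint strictly_alternating (l : list bool) : Prop :=
  match l with
  | a :: ((b :: _) as l') => a <> b /\ strictly_alternating l'
  | _ => True
  end.

Definition ends_with_forall (l : list bool) : Prop :=
  l <> [] /\ last l false = true.

(* The structure B_w: universe {1..n}, n = length w, usual order,
   S = {i | w_i = 1}, min = 1, max = n.  Letters: true = 1, false = 0. *)
Definition eval_term (w : list bool) (env : nat -> nat) (t : term) : nat :=
  match t with
  | TVar i => env i
  | TMin => 1
  | TMax => length w
  end.

Definition update (env : nat -> nat) (i v : nat) : nat -> nat :=
  fun j => if Nat.eqb j i then v else env j.

Fixpoint sat (w : list bool) (env : nat -> nat) (f : formula) : Prop :=
  match f with
  | FLt a b => eval_term w env a < eval_term w env b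
  | FS a => nth (eval_term w env a - 1) w false = true
  | FEq a b => eval_term w env a = eval_term w env b
  | FTrue => True
  | FFalse => False
  | FNot g => ~ sat w env g
  | FAnd g h => sat w env g /\ sat w env h
  | FOr g h => sat w env g \/ sat w env h
  | FImp g h => sat w env g -> sat w env h
  | FEx i g => exists v, 1 <= v <= length w /\ sat w (update env i v) g
  | FAll i g => forall v, 1 <= v <= length w -> sat w (update env i v) g
  end.

Definition models (w : list bool) (f : formula) : Prop := sat w (fun _ => 1) f.

Definition log2R (x : R) : R := ln x / ln 2.

(* Main.v *)
Require Import Defs.
From Stdlib Require Import Reals List.
From Stdlib Require Import Arith PeanoNat Lia Lra Classical.
Import ListNotations.

Fixpoint pre (q : bool) (d k : nat) (M : formula) : formula :=
  match k with
  | 0 => M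
  | S k' => if q then FAll d (pre false (S d) k' M) else FEx d (pre true (S d) k' M)
  end.

Definition agree (d : nat) (e1 e2 : nat -> nat) := forall i, i < d -> e1 i = e2 i.
Definition termOK (d : nat) (t : term) : Prop :=
  match t with TVar i => i < d | _ => True end.

Lemma eval_agree w d t e1 e2 : termOK d t -> agree d e1 e2 -> eval_term w e1 t = eval_term w e2 t.
Proof. destruct t; simpl; auto. Qed.

Lemma termOK_S d t : termOK d t -> termOK (S d) t.
Proof. destruct t; simpl; auto; lia. Qed.

Lemma upd_eq env i v : update env i v i = v.
Proof. unfold update; rewrite Nat.eqb_refl; auto. Qed.
Lemma upd_neq env i j v : j <> i -> update env i v j = env j.
Proof. intros; unfold update; destruct (Nat.eqb_spec j i); congruence. Qed.

Lemma agree_upd d env v : agree d (update env d v) env.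
Proof. intros i Hi; apply upd_neq; lia. Qed.

Lemma agree_upd2 d env env' v : agree (S d) env' (update env d v) -> agree d env' env.
Proof. intros H i Hi. rewrite H by lia. apply upd_neq; lia. Qed.

Lemma ev_upd w d t env v : termOK d t -> eval_term w (update env d v) t = eval_term w env t.
Proof. intros; apply eval_agree with d; auto; apply agree_upd. Qed.

Definition IndepAt w d M env := forall env', agree d env' env -> (sat w env' M <-> sat w env M).

Lemma IndepAt_upd w d M env v : IndepAt w d M env -> IndepAt w (S d) M (update env d v).
Proof. intros H env' Ha. rewrite (H env' (agree_upd2 _ _ _ _ Ha)). symmetry. apply H. apply agree_upd. Qed.
Lemma IndepAt_upd_sat w d M env v : IndepAt w d M env -> (sat w (update env d v) M <-> sat w env M).
Proof. intros H; apply H; apply agree_upd. Qed.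

Lemma pre_indep w (Hw : 1 <= length w) k : forall q d env M, IndepAt w d M env ->
  (sat w env (pre q d k M) <-> sat w env M).
Proof.
  induction k; intros q d env M H; simpl; [tauto|].
  destruct q; simpl.
  - split.
    + intros Hall. specialize (Hall 1 (conj (le_n 1) Hw)).
      rewrite IHk in Hall by (apply IndepAt_upd; auto).
      rewrite IndepAt_upd_sat in Hall; auto.
    + intros HM v Hv. rewrite IHk by (apply IndepAt_upd; auto).
      rewrite IndepAt_upd_sat; auto.
  - split.
    + intros [v [Hv Hs]]. rewrite IHk in Hs by (apply IndepAt_upd; auto).
      rewrite IndepAt_upd_sat in Hs; auto.
    + intros HM. exists 1. split; [lia|]. rewrite IHk by (apply IndepAt_upd; auto).
      rewrite IndepAt_upd_sat; auto.
Qed.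

Lemma pre_and_l w (Hw : 1 <= length w) k : forall q d env B M, IndepAt w d B env ->
  (sat w env (pre q d k (FAnd B M)) <-> sat w env B /\ sat w env (pre q d k M)).
Proof.
  induction k; intros q d env B M H; simpl; [tauto|].
  destruct q; simpl.
  - split.
    + intros Hall. split.
      * specialize (Hall 1 (conj (le_n 1) Hw)).
        rewrite IHk in Hall by (apply IndepAt_upd; auto).
        rewrite IndepAt_upd_sat in Hall; tauto.
      * intros v Hv. specialize (Hall v Hv). rewrite IHk in Hall by (apply IndepAt_upd; auto). tauto.
    + intros [HB Hall] v Hv. rewrite IHk by (apply IndepAt_upd; auto).
      rewrite IndepAt_upd_sat; auto.
  - split.
    + intros [v [Hv Hs]]. rewrite IHk in Hs by (apply IndepAt_upd; auto).
      rewrite IndepAt_upd_sat in Hs; auto. split; [tauto|]. exists v; tauto.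
    + intros [HB [v [Hv Hs]]]. exists v. split; auto. rewrite IHk by (apply IndepAt_upd; auto).
      rewrite IndepAt_upd_sat; auto.
Qed.

Lemma pre_or_l w (Hw : 1 <= length w) k : forall q d env B M, IndepAt w d B env ->
  (sat w env (pre q d k (FOr B M)) <-> sat w env B \/ sat w env (pre q d k M)).
Proof.
  induction k; intros q d env B M H; simpl; [tauto|].
  destruct q; simpl.
  - split.
    + intros Hall. destruct (classic (sat w env B)) as [HB|HB]; [left; auto|right].
      intros v Hv. specialize (Hall v Hv). rewrite IHk in Hall by (apply IndepAt_upd; auto).
      rewrite IndepAt_upd_sat in Hall; auto. tauto.
    + intros Hor v Hv. rewrite IHk by (apply IndepAt_upd; auto).
      rewrite IndepAt_upd_sat; auto. destruct Hor as [HB|Hall]; [left; auto|right; auto].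
  - split.
    + intros [v [Hv Hs]]. rewrite IHk in Hs by (apply IndepAt_upd; auto).
      rewrite IndepAt_upd_sat in Hs; auto. destruct Hs as [HB|Hs]; [left; auto|right; exists v; auto].
    + intros [HB|[v [Hv Hs]]].
      * exists 1. split; [lia|]. rewrite IHk by (apply IndepAt_upd; auto).
        rewrite IndepAt_upd_sat; auto.
      * exists v. split; auto. rewrite IHk by (apply IndepAt_upd; auto). auto.
Qed.

Lemma pre_imp_l w (Hw : 1 <= length w) k : forall q d env B M, IndepAt w d B env ->
  (sat w env (pre q d k (FImp B M)) <-> (sat w env B -> sat w env (pre q d k M))).
Proof.
  induction k; intros q d env B M H; simpl; [tauto|].
  destruct q; simpl.
  - split.
    + intros Hall HB v Hv. specialize (Hall v Hv). rewrite IHk in Hall by (apply IndepAt_upd; auto).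
      rewrite IndepAt_upd_sat in Hall; auto.
    + intros Himp v Hv. rewrite IHk by (apply IndepAt_upd; auto).
      rewrite IndepAt_upd_sat; auto.
  - split.
    + intros [v [Hv Hs]] HB. rewrite IHk in Hs by (apply IndepAt_upd; auto).
      rewrite IndepAt_upd_sat in Hs; auto. exists v; auto.
    + intros Himp. destruct (classic (sat w env B)) as [HB|HB].
      * destruct (Himp HB) as [v [Hv Hs]]. exists v. split; auto.
        rewrite IHk by (apply IndepAt_upd; auto). auto.
      * exists 1. split; [lia|]. rewrite IHk by (apply IndepAt_upd; auto).
        rewrite IndepAt_upd_sat; auto. tauto.
Qed.

Lemma pre_ext w k : forall q d env M1 M2,
  (forall env', agree d env' env -> (sat w env' M1 <-> sat w env' M2)) ->
  (sat w env (pre q d k M1) <-> sat w env (pre q d k M2)).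
Proof.
  induction k; intros q d env M1 M2 H; simpl.
  - apply H. intros i _; auto.
  - assert (E : forall v q', sat w (update env d v) (pre q' (S d) k M1) <->
                      sat w (update env d v) (pre q' (S d) k M2)).
    { intros v q'. apply IHk. intros env' Ha. apply H. eapply agree_upd2; eauto. }
    destruct q; simpl.
    + split; intros Hh v Hv; specialize (Hh v Hv); apply E; auto.
    + split; intros [v [Hv Hh]]; exists v; split; auto; apply E; auto.
Qed.

Lemma pre_and_split w (Hw: 1 <= length w) k : forall d env M1 M2,
  (forall v, 1 <= v <= length w -> IndepAt w (S d) M1 (update env d v) \/ IndepAt w (S d) M2 (update env d v)) ->
  (sat w env (pre true d k (FAnd M1 M2)) <-> sat w env (pre true d k M1) /\ sat w env (pre true d k M2)).
Proof.
  destruct k; intros d env M1 M2 H; simpl; [tauto|].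
  assert (E: forall v, 1 <= v <= length w ->
    (sat w (update env d v) (pre false (S d) k (FAnd M1 M2)) <->
     sat w (update env d v) (pre false (S d) k M1) /\ sat w (update env d v) (pre false (S d) k M2))).
  { intros v Hv. destruct (H v Hv) as [H1|H1].
    - rewrite pre_and_l by auto. rewrite (pre_indep w Hw k false (S d) _ M1 H1). tauto.
    - rewrite (pre_ext w k false (S d) _ (FAnd M1 M2) (FAnd M2 M1)) by (intros; simpl; tauto).
      rewrite pre_and_l by auto. rewrite (pre_indep w Hw k false (S d) _ M2 H1). tauto. }
  split.
  - intros Hall; split; intros v Hv; apply (E v Hv); auto.
  - intros [A1 A2] v Hv. apply (E v Hv); auto.
Qed.

Lemma pre_or_split w (Hw: 1 <= length w) k : forall d env M1 M2,
  (forall v, 1 <= v <= length w -> IndepAt w (S d) M1 (update env d v) \/ IndepAt w (S d) M2 (update env d v)) ->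
  (sat w env (pre false d k (FOr M1 M2)) <-> sat w env (pre false d k M1) \/ sat w env (pre false d k M2)).
Proof.
  destruct k; intros d env M1 M2 H; simpl; [tauto|].
  assert (E: forall v, 1 <= v <= length w ->
    (sat w (update env d v) (pre true (S d) k (FOr M1 M2)) <->
     sat w (update env d v) (pre true (S d) k M1) \/ sat w (update env d v) (pre true (S d) k M2))).
  { intros v Hv. destruct (H v Hv) as [H1|H1].
    - rewrite pre_or_l by auto. rewrite (pre_indep w Hw k true (S d) _ M1 H1). tauto.
    - rewrite (pre_ext w k true (S d) _ (FOr M1 M2) (FOr M2 M1)) by (intros; simpl; tauto).
      rewrite pre_or_l by auto. rewrite (pre_indep w Hw k true (S d) _ M2 H1). tauto. }
  split.
  - intros [v [Hv Hs]]. apply (E v Hv) in Hs. destruct Hs; [left|right]; exists v; auto.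
  - intros [[v [Hv Hs]]|[v [Hv Hs]]]; exists v; split; auto; apply (E v Hv); auto.
Qed.

Lemma pre_not w k : forall q d env M,
  (sat w env (pre q d k (FNot M)) <-> ~ sat w env (pre (negb q) d k M)).
Proof.
  induction k; intros q d env M; simpl; [tauto|].
  destruct q; simpl.
  - split.
    + intros Hall [v [Hv Hs]]. specialize (Hall v Hv). rewrite IHk in Hall. auto.
    + intros Hn v Hv. rewrite IHk. simpl. intros Hs. apply Hn. exists v; auto.
  - split.
    + intros [v [Hv Hs]] Hall. rewrite IHk in Hs. apply Hs. apply Hall; auto.
    + intros Hn. apply not_all_ex_not in Hn. destruct Hn as [v Hv].
      apply imply_to_and in Hv. destruct Hv as [Hv Hs]. exists v. split; auto.
      rewrite IHk. simpl. auto.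
Qed.

Fixpoint qfok (m : nat) (f : formula) : Prop :=
  match f with
  | FLt a b | FEq a b => termOK m a /\ termOK m b
  | FS a => termOK m a
  | FTrue | FFalse => True
  | FNot g => qfok m g
  | FAnd g h | FOr g h | FImp g h => qfok m g /\ qfok m h
  | FEx _ _ | FAll _ _ => False
  end.

Lemma termOK_mono m m' t : m <= m' -> termOK m t -> termOK m' t.
Proof. destruct t; simpl; auto; lia. Qed.

Lemma qfok_mono m m' f : m <= m' -> qfok m f -> qfok m' f.
Proof.
  intros Hm; induction f; simpl; intuition eauto using termOK_mono.
Qed.

Lemma qfok_indep w m f env : qfok m f -> IndepAt w m f env.
Proof.
  unfold IndepAt. induction f; simpl; intros Hq env' Ha; try tauto.
  - rewrite !(eval_agree w m _ env' env) by tauto. tauto.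
  - rewrite (eval_agree w m _ env' env) by tauto. tauto.
  - rewrite !(eval_agree w m _ env' env) by tauto. tauto.
  - rewrite IHf; tauto.
  - rewrite IHf1, IHf2; tauto.
  - rewrite IHf1, IHf2; tauto.
  - rewrite IHf1, IHf2; tauto.
Qed.

Lemma qfok_qcount m f : qfok m f -> qcount f = 0.
Proof. induction f; simpl; intuition; rewrite H, H1; auto. Qed.

Lemma termOK_fv m t : termOK m t -> forall x, In x (term_vars t) -> x < m.
Proof. destruct t; simpl; intros H x Hx; intuition; subst; auto. Qed.

Lemma qfok_fv m f : qfok m f -> forall x, In x (free_vars f) -> x < m.
Proof.
  induction f; simpl; intros Hq x Hx; try tauto;
  try (rewrite in_app_iff in Hx; destruct Hq; destruct Hx; eauto using termOK_fv; fail).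
  all: eauto using termOK_fv.
Qed.

Definition FLe a b := FOr (FLt a b) (FEq a b).
Definition rngA (side : bool) a b u := if side then FAnd (FLe a u) (FLt u b) else FAnd (FLt a u) (FLe u b).
Definition rngO a b u := FAnd (FLt a u) (FLt u b).
Definition baseGE a b e := if e =? 0 then FLe a b else FLt a b.
Definition sA1 (side : bool) e := if side then (e+1)/2 else e+1-(e+1)/2.
Definition sA2 (side : bool) e := if side then e+1-(e+1)/2 else (e+1)/2.

Lemma baseGE_qfok m a b e : termOK m a -> termOK m b -> qfok m (baseGE a b e).
Proof. intros; unfold baseGE, FLe; destruct (e =? 0); simpl; auto. Qed.

Fixpoint GM (k : nat) (isA side : bool) (d : nat) (a b : term) (e : nat) : formula :=
  if e <=? 1 then baseGE a b e else
  match k with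
  | 0 => FFalse
  | S k' =>
    if isA then
      FAnd (FLt a b) (FImp (rngA side a b (TVar d))
        (FOr (GM k' false false (S d) a (TVar d) (sA1 side e))
             (GM k' false false (S d) (TVar d) b (sA2 side e))))
    else
      FAnd (rngO a b (TVar d)) (FAnd (GM k' true true (S d) a (TVar d) (e/2))
                                     (GM k' true false (S d) (TVar d) b (e - e/2)))
  end.

Lemma GM_base k isA side d a b e : e <= 1 -> GM k isA side d a b e = baseGE a b e.
Proof. intros H; destruct k; cbn [GM]; destruct (Nat.leb_spec e 1); auto; lia. Qed.

Lemma GM_stepE k side d a b e : 2 <= e -> GM (S k) false side d a b e =
  FAnd (rngO a b (TVar d)) (FAnd (GM k true true (S d) a (TVar d) (e/2))
                                 (GM k true false (S d) (TVar d) b (e - e/2))).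
Proof. intros H; cbn [GM]; destruct (Nat.leb_spec e 1); auto; lia. Qed.

Lemma GM_stepA k side d a b e : 2 <= e -> GM (S k) true side d a b e =
  FAnd (FLt a b) (FImp (rngA side a b (TVar d))
        (FOr (GM k false false (S d) a (TVar d) (sA1 side e))
             (GM k false false (S d) (TVar d) b (sA2 side e)))).
Proof. intros H; cbn [GM]; destruct (Nat.leb_spec e 1); auto; lia. Qed.

Lemma GM_qfok k : forall isA side d a b e, termOK d a -> termOK d b -> qfok (d + k) (GM k isA side d a b e).
Proof.
  induction k; intros isA side d a b e Ha Hb.
  - destruct (Nat.leb_spec e 1).
    + rewrite GM_base by auto. apply baseGE_qfok; apply (termOK_mono d); auto; lia.
    + cbn [GM]. destruct (Nat.leb_spec e 1); [lia|]. simpl; auto.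
  - destruct (Nat.leb_spec e 1).
    + rewrite GM_base by auto. apply baseGE_qfok; apply (termOK_mono d); auto; lia.
    + assert (Hd : d + S k = S d + k) by lia. rewrite Hd.
      assert (Ha' : termOK (S d) a) by (apply termOK_S; auto).
      assert (Hb' : termOK (S d) b) by (apply termOK_S; auto).
      assert (Hv : termOK (S d) (TVar d)) by (simpl; lia).
      destruct isA.
      * rewrite GM_stepA by lia. unfold rngA, FLe; destruct side; cbn [qfok];
        repeat split; try (apply IHk; auto; fail); apply (termOK_mono (S d)); auto; lia.
      * rewrite GM_stepE by lia. unfold rngO; cbn [qfok];
        repeat split; try (apply IHk; auto; fail); apply (termOK_mono (S d)); auto; lia.
Qed.

Lemma GM_out_A w k side d a b e env : termOK d a -> termOK d b ->
  ~ sat w env (rngA side a b (TVar d)) -> IndepAt w (S d) (GM k true side d a b e) env.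
Proof.
  intros Ha Hb Hr. destruct (Nat.leb_spec e 1).
  - rewrite GM_base by auto. apply qfok_indep. apply baseGE_qfok; apply termOK_S; auto.
  - destruct k.
    + cbn [GM]. destruct (Nat.leb_spec e 1); [lia|]. apply qfok_indep; simpl; auto.
    + rewrite GM_stepA by lia. intros env' Hag.
      assert (HR : sat w env' (rngA side a b (TVar d)) <-> sat w env (rngA side a b (TVar d))).
      { refine (qfok_indep w (S d) _ env _ env' Hag). unfold rngA, FLe; destruct side; simpl;
        repeat split; try (apply termOK_S; auto); simpl; lia. }
      cbn [sat]. rewrite !(eval_agree w (S d) a env' env), !(eval_agree w (S d) b env' env)
        by (auto; apply termOK_S; auto). tauto.
Qed.

Lemma GM_out_E w k side d a b e env : termOK d a -> termOK d b ->
  ~ sat w env (rngO a b (TVar d)) -> IndepAt w (S d) (GM k false side d a b e) env.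
Proof.
  intros Ha Hb Hr. destruct (Nat.leb_spec e 1).
  - rewrite GM_base by auto. apply qfok_indep. apply baseGE_qfok; apply termOK_S; auto.
  - destruct k.
    + cbn [GM]. destruct (Nat.leb_spec e 1); [lia|]. apply qfok_indep; simpl; auto.
    + rewrite GM_stepE by lia. intros env' Hag.
      assert (HR : sat w env' (rngO a b (TVar d)) <-> sat w env (rngO a b (TVar d))).
      { refine (qfok_indep w (S d) _ env _ env' Hag). unfold rngO; simpl;
        repeat split; try (apply termOK_S; auto); simpl; lia. }
      change (sat w env' (rngO a b (TVar d)) /\ sat w env' (FAnd (GM k true true (S d) a (TVar d) (e / 2))
        (GM k true false (S d) (TVar d) b (e - e / 2))) <->
        sat w env (rngO a b (TVar d)) /\ sat w env (FAnd (GM k true true (S d) a (TVar d) (e / 2))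
        (GM k true false (S d) (TVar d) b (e - e / 2)))).
      tauto.
Qed.

Definition CorrA w k e := forall side d a b env, termOK d a -> termOK d b ->
  1 <= eval_term w env a <= length w -> 1 <= eval_term w env b <= length w ->
  (sat w env (pre true d k (GM k true side d a b e)) <-> eval_term w env a + e <= eval_term w env b).
Definition CorrE w k e := forall d a b env, termOK d a -> termOK d b ->
  1 <= eval_term w env a <= length w -> 1 <= eval_term w env b <= length w ->
  (sat w env (pre false d k (GM k false false d a b e)) <-> eval_term w env a + e <= eval_term w env b).

Lemma half e : 2*(e/2) <= e <= 2*(e/2)+1.
Proof. pose proof (Nat.div_mod_eq e 2); pose proof (Nat.mod_upper_bound e 2); lia. Qed.

Lemma ev2a w env d v u : eval_term w (update (update env d v) (S d) u) (TVar d) = v.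
Proof. cbn [eval_term]. rewrite upd_neq by lia. apply upd_eq. Qed.
Lemma ev2b w env d v u : eval_term w (update (update env d v) (S d) u) (TVar (S d)) = u.
Proof. cbn [eval_term]. apply upd_eq. Qed.
Lemma ev2t w env d v u t : termOK d t -> eval_term w (update (update env d v) (S d) u) t = eval_term w env t.
Proof. intros H. rewrite ev_upd by (apply termOK_S; auto). apply ev_upd; auto. Qed.

Lemma base_corr w (Hw : 1 <= length w) k e : e <= 1 -> CorrE w k e /\ CorrA w k e.
Proof.
  intros He. split.
  - intros d a b env Ha Hb Hva Hvb. rewrite GM_base by auto.
    rewrite pre_indep; auto.
    2: { apply qfok_indep. apply baseGE_qfok; auto. }
    unfold baseGE, FLe; destruct e as [|[|]]; simpl; split; intros; lia.
  - intros side d a b env Ha Hb Hva Hvb. rewrite GM_base by auto.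
    rewrite pre_indep; auto.
    2: { apply qfok_indep. apply baseGE_qfok; auto. }
    unfold baseGE, FLe; destruct e as [|[|]]; simpl; split; intros; lia.
Qed.

Lemma Econj w (Hw : 1 <= length w) k d P a b e1 e2 env :
  termOK d a -> termOK d b -> qfok (S d) P ->
  1 <= eval_term w env a <= length w -> 1 <= eval_term w env b <= length w ->
  CorrA w k e1 -> CorrA w k e2 ->
  (sat w env (pre false d (S k) (FAnd P (FAnd (GM k true true (S d) a (TVar d) e1)
                                              (GM k true false (S d) (TVar d) b e2)))) <->
   exists v, 1 <= v <= length w /\ sat w (update env d v) P /\
     eval_term w env a + e1 <= v /\ v + e2 <= eval_term w env b).
Proof.
  intros Ha Hb HP Hva Hvb HA1 HA2. cbn [pre sat].
  assert (Hv' : termOK (S d) (TVar d)) by (simpl; lia).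
  assert (Ha' : termOK (S d) a) by (apply termOK_S; auto).
  assert (Hb' : termOK (S d) b) by (apply termOK_S; auto).
  assert (PV : forall v, 1 <= v <= length w ->
    (sat w (update env d v) (pre true (S d) k (FAnd P (FAnd (GM k true true (S d) a (TVar d) e1)
                                              (GM k true false (S d) (TVar d) b e2)))) <->
     sat w (update env d v) P /\ eval_term w env a + e1 <= v /\ v + e2 <= eval_term w env b)).
  { intros v Hv. rewrite pre_and_l by (auto; apply qfok_indep; auto).
    rewrite pre_and_split; auto.
    2: { intros u Hu. destruct (lt_dec u v).
         - right. apply GM_out_A; auto. unfold rngA, FLe; cbn [sat].
           rewrite ev2a, ev2b. lia.
         - left. apply GM_out_A; auto. unfold rngA, FLe; cbn [sat].
           rewrite ev2a, ev2b. lia. }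
    rewrite (HA1 true (S d) a (TVar d) (update env d v)), (HA2 false (S d) (TVar d) b (update env d v));
      auto; cbn [eval_term]; rewrite ?upd_eq, ?ev_upd by auto; try lia. tauto. }
  split.
  - intros [v [Hv Hs]]. exists v. split; auto. apply PV; auto.
  - intros [v [Hv Hs]]. exists v. split; auto. apply PV; auto.
Qed.

Lemma stepE w (Hw : 1 <= length w) k e : 2 <= e -> (forall e', e' <= e - e/2 -> CorrA w k e') -> CorrE w (S k) e.
Proof.
  intros He IH d a b env Ha Hb Hva Hvb. rewrite GM_stepE by auto.
  pose proof (half e) as Hh.
  assert (Q : qfok (S d) (rngO a b (TVar d))).
  { unfold rngO; simpl; repeat split; try (apply termOK_S; auto); simpl; lia. }
  assert (C1 : CorrA w k (e/2)) by (apply IH; lia).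
  assert (C2 : CorrA w k (e - e/2)) by (apply IH; lia).
  rewrite (Econj w Hw k d _ a b (e/2) (e - e/2) env Ha Hb Q Hva Hvb C1 C2).
  set (h := e/2) in *.
  split.
  - intros [v [Hv [Hr [H1 H2]]]]. lia.
  - intros Hab. exists (eval_term w env a + h). split; [lia|].
    unfold rngO; cbn [sat eval_term]. rewrite upd_eq, !ev_upd by auto. lia.
Qed.

Lemma stepA w (Hw : 1 <= length w) k e : 2 <= e ->
  (forall e', e' <= e + 1 - (e+1)/2 -> CorrE w k e') -> CorrA w (S k) e.
Proof.
  intros He IH side d a b env Ha Hb Hva Hvb. rewrite GM_stepA by auto. cbn [pre sat].
  assert (Hv' : termOK (S d) (TVar d)) by (simpl; lia).
  assert (Ha' : termOK (S d) a) by (apply termOK_S; auto).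
  assert (Hb' : termOK (S d) b) by (apply termOK_S; auto).
  pose proof (half (e+1)) as Hh.
  assert (HR : qfok (S d) (rngA side a b (TVar d))).
  { unfold rngA, FLe; destruct side; simpl; repeat split; auto. }
  assert (PV : forall v, 1 <= v <= length w ->
    (sat w (update env d v) (pre false (S d) k (FAnd (FLt a b) (FImp (rngA side a b (TVar d))
        (FOr (GM k false false (S d) a (TVar d) (sA1 side e))
             (GM k false false (S d) (TVar d) b (sA2 side e)))))) <->
     eval_term w env a < eval_term w env b /\
     (sat w (update env d v) (rngA side a b (TVar d)) ->
       eval_term w env a + sA1 side e <= v \/ v + sA2 side e <= eval_term w env b))).
  { intros v Hv. rewrite pre_and_l by (auto; apply qfok_indep; simpl; auto).
    rewrite pre_imp_l by (auto; apply qfok_indep; auto).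
    rewrite pre_or_split; auto.
    2: { intros u Hu. destruct (lt_dec u v).
         - right. apply GM_out_E; auto. unfold rngO; cbn [sat].
           rewrite ev2a, ev2b. lia.
         - left. apply GM_out_E; auto. unfold rngO; cbn [sat].
           rewrite ev2a, ev2b. lia. }
    assert (CE1 : CorrE w k (sA1 side e)) by (apply IH; unfold sA1; destruct side; lia).
    assert (CE2 : CorrE w k (sA2 side e)) by (apply IH; unfold sA2; destruct side; lia).
    rewrite (CE1 (S d) a (TVar d) (update env d v) Ha' Hv'), (CE2 (S d) (TVar d) b (update env d v) Hv' Hb');
      cbn [eval_term sat]; rewrite ?upd_eq, ?ev_upd by auto; try lia. tauto. }
  split.
  - intros Hall.
    assert (Hab : eval_term w env a < eval_term w env b) by (apply (PV 1); [lia| apply Hall; lia]).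
    destruct (le_lt_dec (eval_term w env a + e) (eval_term w env b)) as [ok|bad]; auto.
    exfalso. set (A := eval_term w env a) in *. set (B := eval_term w env b) in *.
    set (h := (e+1)/2) in *.
    unfold sA1, sA2 in PV; unfold rngA, FLe in PV; destruct side; cbn [sat eval_term] in PV;
      fold h in PV.
    + destruct (le_lt_dec A (B + h - e)).
      * assert (Hx : 1 <= B + h - e <= length w) by lia.
        apply (PV _ Hx) in Hall; auto. destruct Hall as [_ Hall].
        rewrite upd_eq, !ev_upd in Hall by auto. fold A B in Hall. lia.
      * assert (Hx : 1 <= A <= length w) by lia.
        apply (PV _ Hx) in Hall; auto. destruct Hall as [_ Hall].
        rewrite upd_eq, !ev_upd in Hall by auto. fold A B in Hall. lia.
    + destruct (le_lt_dec B (A + e - h)).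
      * assert (Hx : 1 <= B <= length w) by lia.
        apply (PV _ Hx) in Hall; auto. destruct Hall as [_ Hall].
        rewrite upd_eq, !ev_upd in Hall by auto. fold A B in Hall. lia.
      * assert (Hx : 1 <= A + e - h <= length w) by lia.
        apply (PV _ Hx) in Hall; auto. destruct Hall as [_ Hall].
        rewrite upd_eq, !ev_upd in Hall by auto. fold A B in Hall. lia.
  - intros Hle v Hv. apply PV; auto. split; [lia|]. intros _.
    unfold sA1, sA2; destruct side; lia.
Qed.

Lemma corr_all w (Hw : 1 <= length w) : forall k e, e <= 2^k + 1 -> CorrE w (k+2) e /\ CorrA w (k+2) e.
Proof.
  induction k; intros e He.
  - destruct (le_lt_dec e 1) as [H1|H1]; [apply base_corr; auto|].
    assert (e = 2) by (simpl in He; lia). subst e.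
    assert (A1 : forall e', e' <= 1 -> CorrA w 1 e') by (intros; apply (base_corr w Hw); auto).
    assert (A0 : forall e', e' <= 1 -> CorrA w 0 e') by (intros; apply (base_corr w Hw); auto).
    assert (E1 : forall e', e' <= 1 -> CorrE w 1 e') by (intros; apply (base_corr w Hw); auto).
    assert (E12 : CorrE w 1 2).
    { apply stepE; auto; intros e' He'; apply A0; simpl in He'; lia. }
    split.
    + apply stepE; auto; intros e' He'; apply A1; simpl in He'; lia.
    + apply stepA; auto; intros e' He'; simpl in He';
      (destruct (le_lt_dec e' 1); [apply E1; auto|]);
      replace e' with 2 by lia; exact E12.
  - destruct (le_lt_dec e 1) as [H1|H1]; [apply base_corr; auto|].
    replace (S k + 2) with (S (k + 2)) by lia.
    assert (Hp : 2 ^ S k = 2 * 2 ^ k) by (simpl; lia).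
    pose proof (half e) as Hh1. pose proof (half (e+1)) as Hh2.
    split.
    + apply stepE; auto; intros e' He'; apply IHk; lia.
    + apply stepA; auto; intros e' He'; apply IHk; lia.
Qed.

Lemma corr_mono w (Hw : 1 <= length w) k K e : k + 2 <= K -> e <= 2^k + 1 -> CorrE w K e /\ CorrA w K e.
Proof.
  intros HK He. replace K with ((K - 2) + 2) by lia. apply corr_all; auto.
  assert (2 ^ k <= 2 ^ (K-2)) by (apply Nat.pow_le_mono_r; lia). lia.
Qed.

Fixpoint alt (q : bool) (k : nat) : list bool :=
  match k with 0 => [] | S k' => q :: alt (negb q) k' end.

Lemma qfok_top m M : qfok m M -> qprefix M = [] /\ matrix M = M.
Proof. destruct M; simpl; tauto. Qed.

Lemma pre_qprefix m M : qfok m M -> forall k q d, qprefix (pre q d k M) = alt q k.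
Proof.
  intros HM. induction k; intros q d; simpl.
  - apply (qfok_top m M HM).
  - destruct q; simpl; rewrite IHk; reflexivity.
Qed.

Lemma pre_matrix m M : qfok m M -> forall k q d, matrix (pre q d k M) = M.
Proof.
  intros HM. induction k; intros q d; simpl.
  - apply (qfok_top m M HM).
  - destruct q; simpl; rewrite IHk; reflexivity.
Qed.

Lemma pre_qcount M : forall k q d, qcount (pre q d k M) = k + qcount M.
Proof. induction k; intros q d; simpl; auto. destruct q; simpl; rewrite IHk; reflexivity. Qed.

Lemma pre_fv M : forall k q d x, In x (free_vars (pre q d k M)) -> In x (free_vars M) /\ (x < d \/ d + k <= x).
Proof.
  induction k; intros q d x Hx; simpl in Hx.
  - split; auto; lia.
  - destruct q; simpl in Hx; apply filter_In in Hx; destruct Hx as [Hx Hb];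
      apply IHk in Hx; destruct Hx as [Hx Hr]; split; auto;
      destruct (Nat.eqb_spec d x); simpl in Hb; try discriminate; lia.
Qed.

Lemma alt_SA : forall k q, strictly_alternating (alt q k).
Proof.
  induction k; intros q; [simpl; auto|].
  destruct k; [simpl; auto|].
  change (alt q (S (S k))) with (q :: alt (negb q) (S k)).
  cbn [strictly_alternating]. split; [destruct q; discriminate|]. exact (IHk (negb q)).
Qed.

Lemma alt_last : forall t q, last (alt q (S (S (2*t)))) false = negb q.
Proof.
  induction t; intros q; [reflexivity|].
  replace (2 * S t) with (S (S (2*t))) by lia.
  change (last (alt q (S (S (S (S (2*t)))))) false) with (last (alt (negb (negb q)) (S (S (2*t)))) false).
  rewrite IHt. rewrite Bool.negb_involutive. reflexivity.
Qed.

Lemma sentence_ok M K t : K = 2*t+2 -> qfok K M ->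
  is_sentence (pre false 0 K M) /\ prenex (pre false 0 K M) /\ qcount (pre false 0 K M) = K /\
  strictly_alternating (qprefix (pre false 0 K M)) /\ ends_with_forall (qprefix (pre false 0 K M)).
Proof.
  intros HK HM. split; [|split; [|split; [|split]]].
  - unfold is_sentence. destruct (free_vars (pre false 0 K M)) as [|x l] eqn:E; auto.
    exfalso. assert (Hx : In x (free_vars (pre false 0 K M))) by (rewrite E; left; auto).
    apply pre_fv in Hx. destruct Hx as [Hx Hr]. apply (qfok_fv K M HM) in Hx. lia.
  - unfold prenex, quantifier_free. rewrite (pre_matrix K M HM). apply (qfok_qcount K M HM).
  - rewrite pre_qcount. rewrite (qfok_qcount K M HM). lia.
  - rewrite (pre_qprefix K M HM). apply alt_SA.
  - rewrite (pre_qprefix K M HM). subst K. replace (2*t+2) with (S (S (2*t))) by lia.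
    split; [discriminate|]. rewrite alt_last. reflexivity.
Qed.

Open Scope R_scope.
Lemma log_bound (n q : nat) : (1 <= n)%nat -> (q <= Nat.log2 n + 5)%nat -> INR q <= log2R (INR n) + 5.
Proof.
  intros Hn Hq.
  set (m := Nat.log2 n).
  assert (Hm : (2 ^ m <= n)%nat) by (apply Nat.log2_spec; lia).
  assert (Hln2 : 0 < ln 2) by (pose proof ln_lt_2; lra).
  assert (Hpos : 0 < INR n) by (apply lt_0_INR; lia).
  assert (H2m : 2 ^ m <= INR n).
  { replace (2 ^ m) with (INR (2 ^ m)%nat). apply le_INR; auto.
    rewrite pow_INR. simpl. try (f_equal; lra). }
  assert (Hl : INR m * ln 2 <= ln (INR n)).
  { rewrite <- ln_pow by lra. destruct (Rle_lt_or_eq_dec _ _ H2m) as [Hlt|Heq].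
    - left. apply ln_increasing; auto. apply pow_lt; lra.
    - rewrite Heq. lra. }
  assert (Hm2 : INR m <= log2R (INR n)).
  { unfold log2R. apply Rmult_le_reg_r with (ln 2); auto.
    unfold Rdiv. rewrite Rmult_assoc, Rinv_l by lra. lra. }
  assert (INR q <= INR (m + 5)) by (apply le_INR; lia).
  rewrite plus_INR in H. simpl in H. lra.
Qed.
Close Scope R_scope.

Definition letter (c : bool) (t : term) := if c then FS t else FNot (FS t).

Theorem mainTheorem8 :
  exists C : R,
    forall w w' : list bool,
      1 <= length w -> 1 <= length w' -> w' <> w ->
      exists phi : formula,
        is_sentence phi /\ prenex phi /\
        (INR (qcount phi) <= log2R (INR (length w)) + C)%R /\
        strictly_alternating (qprefix phi) /\
        ends_with_forall (qprefix phi) /\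
        models w phi /\ ~ models w' phi.
Proof.
  exists 5%R. intros w w' Hw Hw' Hne.
  set (n := length w) in *.
  set (k0 := Nat.log2 n + 1).
  assert (Hk0 : n <= 2 ^ k0).
  { pose proof (Nat.log2_spec n ltac:(lia)) as [_ H]. unfold k0. rewrite Nat.add_1_r. lia. }
  assert (Ht : exists te to, k0 + 2 <= 2*te+2 <= k0 + 3 /\ k0 + 2 <= 2*to+1 <= k0+3).
  { destruct (Nat.Even_or_Odd k0) as [[m Hm]|[m Hm]].
    - exists m, (m+1). lia.
    - exists (m+1), (m+1). lia. }
  destruct Ht as [te [to [Hte Hto]]].
  assert (HtOK : termOK 0 TMin /\ termOK 0 TMax) by (simpl; auto).
  destruct (lt_eq_lt_dec (length w') n) as [[Hlt|Heq]|Hgt].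
  -
    set (M := GM (2*te+2) false false 0 TMin TMax (n-1)).
    exists (pre false 0 (2*te+2) M).
    assert (HM : qfok (2*te+2) M) by (apply (GM_qfok (2*te+2) false false 0); simpl; auto).
    destruct (sentence_ok M (2*te+2) te eq_refl HM) as [S1 [S2 [S3 [S4 S5]]]].
    assert (CE : CorrE w (2*te+2) (n-1)) by (apply (corr_mono w Hw k0); lia).
    assert (CE' : CorrE w' (2*te+2) (n-1)) by (apply (corr_mono w' Hw' k0); lia).
    refine (conj S1 (conj S2 (conj _ (conj S4 (conj S5 (conj _ _)))))).
    + rewrite S3. apply log_bound; unfold n in *; lia.
    + unfold models, M. rewrite (CE 0 TMin TMax (fun _ => 1)); simpl; auto; unfold n in *; lia.
    + unfold models, M. rewrite (CE' 0 TMin TMax (fun _ => 1)); simpl; auto; unfold n in *; lia.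
  -
    assert (Hj : exists j, j < n /\ nth j w false <> nth j w' false).
    { apply NNPP. intros Hno. apply Hne. symmetry. apply nth_ext with false false; [unfold n in *; lia|].
      intros j Hj. destruct (Bool.bool_dec (nth j w false) (nth j w' false)) as [E|E]; auto.
      exfalso. apply Hno. exists j. split; auto. }
    destruct Hj as [j [Hj Hjd]].
    set (L := letter (nth j w false) (TVar 0)).
    set (A1 := GM (2*to+1) true true 1 TMin (TVar 0) j).
    set (A2 := GM (2*to+1) true false 1 (TVar 0) TMax (n-1-j)).
    set (M := FAnd L (FAnd A1 A2)).
    exists (pre false 0 (2*to+2) M).
    assert (HM : qfok (2*to+2) M).
    { unfold M, L, A1, A2, letter. cbn [qfok]. repeat split.
      - destruct (nth j w false); simpl; lia.
      - apply (qfok_mono (1 + (2*to+1))); [lia|]. apply GM_qfok; simpl; auto.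
      - apply (qfok_mono (1 + (2*to+1))); [lia|]. apply GM_qfok; simpl; auto. }
    destruct (sentence_ok M (2*to+2) to eq_refl HM) as [S1 [S2 [S3 [S4 S5]]]].
    assert (CA1 : CorrA w (2*to+1) j) by (apply (corr_mono w Hw k0); lia).
    assert (CA2 : CorrA w (2*to+1) (n-1-j)) by (apply (corr_mono w Hw k0); lia).
    assert (CA1' : CorrA w' (2*to+1) j) by (apply (corr_mono w' Hw' k0); lia).
    assert (CA2' : CorrA w' (2*to+1) (n-1-j)) by (apply (corr_mono w' Hw' k0); lia).
    assert (HL : qfok 1 L) by (unfold L, letter; destruct (nth j w false); simpl; lia).
    refine (conj S1 (conj S2 (conj _ (conj S4 (conj S5 (conj _ _)))))).
    + rewrite S3. apply log_bound; unfold n in *; lia.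
    + unfold models. replace (2*to+2) with (S (2*to+1)) by lia. unfold M, A1, A2.
      rewrite (Econj w Hw (2*to+1) 0 L TMin TMax j (n-1-j) (fun _ => 1)); simpl; auto; try (unfold n in *; lia).
      exists (j+1). split; [unfold n in *; lia|]. split; [|unfold n in *; lia].
      unfold L, letter. destruct (nth j w false) eqn:E; cbn [sat eval_term]; rewrite upd_eq;
        replace (j + 1 - 1) with j by lia; congruence.
    + unfold models. replace (2*to+2) with (S (2*to+1)) by lia. unfold M, A1, A2.
      rewrite (Econj w' Hw' (2*to+1) 0 L TMin TMax j (n-1-j) (fun _ => 1)); simpl; auto; try lia.
      intros [v [Hv [HLv [H1 H2]]]].
      assert (v = j + 1) by lia. subst v.
      unfold L, letter in HLv. destruct (nth j w false) eqn:E; cbn [sat eval_term] in HLv;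
        rewrite upd_eq in HLv; replace (j + 1 - 1) with j in HLv by lia.
      * congruence.
      * destruct (nth j w' false); congruence.
  -
    set (M := GM (2*te+2) true true 0 TMin TMax n).
    exists (pre false 0 (2*te+2) (FNot M)).
    assert (HM : qfok (2*te+2) (FNot M)) by (simpl; apply (GM_qfok (2*te+2) true true 0); simpl; auto).
    destruct (sentence_ok (FNot M) (2*te+2) te eq_refl HM) as [S1 [S2 [S3 [S4 S5]]]].
    assert (CA : CorrA w (2*te+2) n) by (apply (corr_mono w Hw k0); lia).
    assert (CA' : CorrA w' (2*te+2) n) by (apply (corr_mono w' Hw' k0); lia).
    refine (conj S1 (conj S2 (conj _ (conj S4 (conj S5 (conj _ _)))))).
    + rewrite S3. apply log_bound; unfold n in *; lia.
    + unfold models. rewrite pre_not. simpl negb. unfold M; rewrite (CA true 0 TMin TMax (fun _ => 1)); simpl; auto; unfold n in *; lia.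
    + unfold models. rewrite pre_not. simpl negb. unfold M; rewrite (CA' true 0 TMin TMax (fun _ => 1)); simpl; auto; unfold n in *; lia.
Qed.
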